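(* Let $k$ be a positive integer, $a=6k+4$, $t=\frac{a-2}{2}$, $b=a+1$, $c=a+\frac a2$, $S=\{a,b,c\}$, $G=\langle S\rangle$. Let $A_{0,k}=\{0\}$, $B_{0,k}=\emptyset$, and for $i\in[1,t]$ let $A_{i,k}=[ia,\,ia+i]$ and $B_{i,k}=A_{i-1,k}+\{c\}$. Let $C=[(t+1)a,\infty[$ and $H_{11,k}=\bigcup_{i=0}^{t}(A_{i,k}\cup B_{i,k})\cup C$. Then: (1) $x\in G$ if and only if $x=(q+u)a+u\cdot\frac a2+r$ for some $q,r,u\in\mathbb{N}$ with $0\le r\le q$; (2) $G=H_{11,k}$; (3) $A_{i,k}<B_{i,k}$ for $i\in[0,t]$; $B_{i,k}<A_{i+1,k}$ for $i\in[0,t-1]$; $B_{t,k}<C$; (4) $H_{11,k}$ is a $3$-permutation numerical semigroup.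
   Context: $\mathbb{N}=\{0,1,2,\dots\}$. A numerical semigroup is a submonoid $G$ of $(\mathbb{N},+,0)$ with $\mathbb{N}\setminus G$ finite; $\langle S\rangle$ is the submonoid generated by $S$. Writing the elements of a numerical semigroup as $0=g_0<g_1<g_2<\cdots$, it is an $n$-permutation numerical semigroup if it is generated by $\{g_1,\dots,g_n\}$ and for every $k\in\mathbb{N}$ the tuple $(g_{kn+1}\bmod n,\dots,g_{kn+n}\bmod n)$ contains exactly one representative of each residue class mod $n$. Notation: $[u,v]=\{x\in\mathbb{N}:u\le x\le v\}$, $[u,\infty[=\{x\in\mathbb{N}:x\ge u\}$; $X+Y=\{x+y:x\in X,y\in Y\}$; $X<Y$ means $x<y$ for all $x\in X,y\in Y$ (vacuous if one of them is empty). *)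

(* Defs.v *)
From mathcomp Require Import all_boot.
Set Implicit Arguments. Unset Strict Implicit. Unset Printing Implicit Defensive.

Inductive gen (S : nat -> Prop) : nat -> Prop :=
  | gen0 : gen S 0
  | genS : forall x y, S x -> gen S y -> gen S (x + y).

Definition numerical_semigroup (G : nat -> Prop) : Prop :=
  G 0 /\ (forall x y, G x -> G y -> G (x + y)) /\
  (exists N, forall x, N <= x -> G x).

Definition enumerates (G : nat -> Prop) (g : nat -> nat) : Prop :=
  (forall i, g i < g i.+1) /\ (forall x, G x <-> exists i, g i = x).

Definition perm_numerical_semigroup (n : nat) (G : nat -> Prop) : Prop :=
  numerical_semigroup G /\
  exists g, enumerates G g /\
    (forall x, G x <-> gen (fun y => exists2 j, 1 <= j <= n & y = g j) x) /\
    (forall k r, r < n ->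
       exists! j, (1 <= j <= n) /\ g (k * n + j) %% n = r).

Definition interval (u v : nat) : nat -> Prop := fun x => u <= x <= v.
Definition from (u : nat) : nat -> Prop := fun x => u <= x.

Definition setadd (X Y : nat -> Prop) : nat -> Prop :=
  fun z => exists x y, X x /\ Y y /\ z = x + y.

Definition set_lt (X Y : nat -> Prop) : Prop :=
  forall x y, X x -> Y y -> x < y.

Definition pa (k : nat) : nat := 6 * k + 4.
Definition pt (k : nat) : nat := (pa k - 2) %/ 2.
Definition pb (k : nat) : nat := pa k + 1.
Definition pc (k : nat) : nat := pa k + pa k %/ 2.

Definition Sk (k : nat) : nat -> Prop :=
  fun x => x = pa k \/ x = pb k \/ x = pc k.

Definition Aik (k i : nat) : nat -> Prop :=
  if i == 0 then (fun x => x = 0) else interval (i * pa k) (i * pa k + i).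

Definition Bik (k i : nat) : nat -> Prop :=
  if i == 0 then (fun _ => False)
  else setadd (Aik k i.-1) (fun x => x = pc k).

Definition Ck (k : nat) : nat -> Prop := from ((pt k + 1) * pa k).

Definition H11 (k : nat) : nat -> Prop :=
  fun x => (exists2 i, i <= pt k & Aik k i x \/ Bik k i x) \/ Ck k x.

(* Main.v *)
Require Import Defs.
From mathcomp Require Import all_boot zify.

Lemma gen_add S x y : gen S x -> gen S y -> gen S (x + y).
Proof.
move=> gx gy; elim: gx => [|x' y' Sx _ IH]; first by rewrite add0n.
rewrite -addnA; exact: genS Sx IH.
Qed.

Lemma gen_in S s : S s -> gen S s.
Proof. move=> Ss; rewrite -[s]addn0; apply: genS Ss (gen0 S). Qed.

Lemma gen_mul S s n : S s -> gen S (n * s).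
Proof.
move=> Ss; elim: n => [|n IH]; first by rewrite mul0n; exact: gen0.
rewrite mulSn; exact: genS.
Qed.

Lemma gen_ext (S1 S2 : nat -> Prop) x :
  (forall y, S1 y -> S2 y) -> gen S1 x -> gen S2 x.
Proof.
move=> H; elim=> [|x' y' Sx _ IH]; first exact: gen0.
exact: genS (H _ Sx) IH.
Qed.

Lemma part1_gen (S : nat -> Prop) a h :
  (forall x, S x <-> x = a \/ x = a + 1 \/ x = a + h) ->
  forall x, gen S x <-> exists q r u, r <= q /\ x = (q + u) * a + u * h + r.
Proof.
move=> HS x; split.
  elim=> [|s y Ss _ [q [r [u [hr ->]]]]]; first by exists 0, 0, 0.
  case/HS: Ss => [->|[->|->]].
  - exists q.+1, r, u; split; lia.
  - exists q.+1, r.+1, u; split; lia.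
  - exists q, r, u.+1; split; lia.
move=> [q [r [u [hr ->]]]].
have -> : (q + u) * a + u * h + r = (q - r) * a + (r * (a + 1) + u * (a + h)).
  have -> : q = (q - r) + r by lia.
  rewrite addnK. lia.
apply: gen_add; first by apply: gen_mul; apply/HS; left.
apply: gen_add; apply: gen_mul; apply/HS; right; by [left|right].
Qed.

Definition Hh h x :=
  (exists2 i, i < h & (i*(2*h) <= x <= i*(2*h)+i) \/
                      (0 < i /\ i*(2*h)+h <= x <= i*(2*h)+h+i-1))
  \/ h*(2*h) <= x.

Lemma part2_gen h x : 0 < h ->
  (exists q r u, r <= q /\ x = (q + u) * (2*h) + u * h + r) <-> Hh h x.
Proof.
move=> h0; split.
  move=> [q [r [u [hr ->]]]].
  have [w [e [he ->]]] : exists w e, e < 2 /\ u = 2*w+e.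
    by exists (u %/ 2), (u %% 2); lia.
  have [N hNdef] : exists N, N = q + 3*w + e by eexists.
  have hx : (q + (2*w+e)) * (2*h) + (2*w+e) * h + r = N*(2*h) + e*h + r.
    rewrite hNdef; lia.
  rewrite hx.
  case: (leqP h N) => hN.
    right. have : h*(2*h) <= N*(2*h) by rewrite leq_mul2r hN orbT.
    lia.
  left; exists N => //.
  case: e he hx hNdef => [|[|e]] he hx hNdef; last lia.
    left; lia.
  right; lia.
case=> [[i hi [hA|[hi0 hB]]]|hC].
- exists i, (x - i*(2*h)), 0; split; lia.
- exists i.-1, (x - i*(2*h) - h), 1; split; first lia.
  have -> : (i.-1 + 1) = i by lia. lia.
- have a0 : 0 < 2*h by lia.
  set m := x %/ (2*h). set r0 := x %% (2*h).
  have hxe : x = m * (2*h) + r0 by rewrite /m /r0 -divn_eq.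
  have hr0 : r0 < 2*h by rewrite /r0 ltn_pmod.
  have hm : h <= m by rewrite /m leq_divRL.
  clearbody m r0.
  case: (leqP r0 m) => hrm.
    by exists m, r0, 0; split; lia.
  exists m.-1, (r0 - h), 1; split; first lia.
  have -> : (m.-1 + 1) = m by lia. lia.
Qed.


Fixpoint isq (n j : nat) : nat :=
  match n with 0 => 0 | n'.+1 => if n * n <= j then n else isq n' j end.
Definition isqrt j := isq j j.

Lemma isq_spec n j : j < n.+1 * n.+1 -> isq n j * isq n j <= j < (isq n j).+1 * (isq n j).+1.
Proof.
elim: n => [|n IH] /= h; first lia.
case: ifP => hh; first lia.
apply: IH; lia.
Qed.

Lemma isqrt_spec j : isqrt j * isqrt j <= j < (isqrt j).+1 * (isqrt j).+1.
Proof. apply: isq_spec; nia. Qed.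

Lemma isqrt_eq i j : i * i <= j < i.+1 * i.+1 -> isqrt j = i.
Proof.
move=> hi; have := isqrt_spec j; set r := isqrt j => hr.
case: (ltngtP r i) => // h.
- have : r.+1 * r.+1 <= i * i by apply: leq_mul.
  lia.
- have : i.+1 * i.+1 <= r * r by apply: leq_mul.
  lia.
Qed.

Definition blk h i s := if s <= i then i*(2*h) + s else i*(2*h) + h + s - i - 1.
Definition gg h j := let i := isqrt j in
  if i < h then blk h i (j - i*i) else h*(2*h) + (j - h*h).

Lemma g_blk h i s : i < h -> s <= 2*i -> gg h (i*i+s) = blk h i s.
Proof.
move=> hi hs; rewrite /gg (@isqrt_eq i) ?hi; last lia.
congr blk; lia.
Qed.

Lemma g_C h j : h*h <= j -> gg h j = h*(2*h) + (j - h*h).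
Proof.
move=> hj; rewrite /gg; case: ifP => // hi.
have := isqrt_spec j; set r := isqrt j in hi * => hr.
have : r.+1 * r.+1 <= h * h by apply: leq_mul.
lia.
Qed.

Lemma decomp h j : h*h <= j \/ exists i s, [/\ i < h, s <= 2*i & j = i*i+s].
Proof.
case: (leqP (h*h) j) => hj; [by left|right].
have := isqrt_spec j; set r := isqrt j => hr.
exists r, (j - r*r); split; try lia.
case: (leqP h r) => // hr'.
have : h * h <= r * r by apply: leq_mul.
lia.
Qed.

Lemma g_next h i d : i < h -> d <= 1 -> gg h (i.+1*i.+1+d) = i.+1*(2*h)+d.
Proof.
move=> hi hd; case: (ltnP i.+1 h) => hi1.
  rewrite g_blk //; last lia. rewrite /blk; case: ifP => //; lia.
have e : i.+1 = h by lia.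
rewrite g_C e; lia.
Qed.

Lemma g_mono h j : 0 < h -> gg h j < gg h j.+1.
Proof.
move=> h0; case: (decomp h j) => [hj|[i [s [hi hs ->]]]].
  rewrite !g_C; lia.
case: (ltnP s (2*i)) => hs2.
  rewrite -addnS !g_blk //; rewrite /blk; case: ifP; case: ifP; lia.
have e : (i*i+s).+1 = i.+1*i.+1+0 by lia.
rewrite e g_next // g_blk // /blk; case: ifP; lia.
Qed.

Lemma g_enum h x : 0 < h -> Hh h x <-> exists j, gg h j = x.
Proof.
move=> h0; split.
  case=> [[i hi [hA|[hi0 hB]]]|hC].
  - exists (i*i + (x - i*(2*h))); rewrite g_blk //; last lia.
    rewrite /blk; case: ifP; lia.
  - exists (i*i + (x - i*(2*h) - h + i + 1)); rewrite g_blk //; last lia.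
    rewrite /blk; case: ifP; lia.
  - exists (h*h + (x - h*(2*h))); rewrite g_C; lia.
move=> [j <-]; case: (decomp h j) => [hj|[i [s [hi hs ->]]]].
  by right; rewrite g_C; lia.
left; exists i => //; rewrite g_blk // /blk; case: ifP => hsi; [left|right]; lia.
Qed.

Lemma mod_ih h i : h %% 3 = 2 -> exists z, i*(2*h) = 3*z + i.
Proof.
move=> hh; exists (2*i*(h%/3) + i).
have e : h = 3*(h%/3) + 2 by lia.
rewrite {1}e; lia.
Qed.

Lemma mod_ii i : (i %% 3 = 0 /\ exists z, i*i = 3*z) \/ (i %% 3 <> 0 /\ exists z, i*i = 3*z+1).
Proof.
have e : i = 3*(i%/3) + i%%3 by lia.
set p := i %/ 3 in e *.
have : i %% 3 < 3 by lia.
case: (i %% 3) e => [|[|[|]]] e _ //.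
- left; split=> //; exists (3*p*p); rewrite e; lia.
- right; split=> //; exists (3*p*p+2*p); rewrite e; lia.
- right; split=> //; exists (3*p*p+4*p+1); rewrite e; lia.
Qed.

Lemma uniq3 (f : nat -> nat) r :
  f 1 %% 3 <> f 2 %% 3 -> f 1 %% 3 <> f 3 %% 3 -> f 2 %% 3 <> f 3 %% 3 -> r < 3 ->
  exists! j, (1 <= j <= 3) /\ f j %% 3 = r.
Proof.
move=> h12 h13 h23 hr.
have uq : forall j j', 1 <= j <= 3 -> 1 <= j' <= 3 -> f j %% 3 = f j' %% 3 -> j = j'.
  move=> j j' hj hj' e.
  case: j hj e => [|[|[|[|j]]]] hj e; case: j' hj' e => [|[|[|[|j']]]] hj' e; lia.
case: (f 1 %% 3 =P r) => e1.
  exists 1; split; first by split.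
  by move=> j [hj ej]; apply: uq => //; rewrite ej.
case: (f 2 %% 3 =P r) => e2.
  exists 2; split; first by split.
  by move=> j [hj ej]; apply: uq => //; rewrite ej.
have e3 : f 3 %% 3 = r by lia.
exists 3; split; first by split.
by move=> j [hj ej]; apply: uq => //; rewrite ej.
Qed.

Lemma g_res h m : 2 <= h -> h %% 3 = 2 ->
  let f := fun j => gg h (m*3 + j) in
  [/\ f 1 %% 3 <> f 2 %% 3, f 1 %% 3 <> f 3 %% 3 & f 2 %% 3 <> f 3 %% 3].
Proof.
move=> h2 hh f; rewrite /f.
case: (decomp h (m*3+1)) => [hj|[i [s [hi hs hj]]]].
  rewrite !g_C; try lia; split; lia.
have [z hz] := @mod_ih h i hh.
have i0 : 0 < i by case: i hi hs hj hz => [|i] //=; lia.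
case: (ltnP (s.+1) (2*i)) => hs2.
  have e2 : m*3+2 = i*i+s.+1 by lia.
  have e3 : m*3+3 = i*i+s.+2 by lia.
  rewrite hj e2 e3 !g_blk //; try lia.
  rewrite /blk; case: (mod_ii i) => [[hi3 [z' hz']]|[hi3 [z' hz']]];
  case: ifP; case: ifP; case: ifP; split; lia.
case: (ltnP s (2*i)) => hs3.
  have e2 : m*3+2 = i*i+s.+1 by lia.
  have e3 : m*3+3 = i.+1*i.+1+0 by lia.
  rewrite hj e2 e3 g_next // !g_blk //; try lia.
  rewrite /blk; case: (mod_ii i) => [[hi3 [z' hz']]|[hi3 [z' hz']]];
  case: ifP; case: ifP; split; lia.
have e2 : m*3+2 = i.+1*i.+1+0 by lia.
have e3 : m*3+3 = i.+1*i.+1+1 by lia.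
rewrite hj e2 e3 !g_next // !g_blk //; try lia.
rewrite /blk; case: (mod_ii i) => [[hi3 [z' hz']]|[hi3 [z' hz']]];
case: ifP; split; lia.
Qed.

Lemma Aik_iff k i x : Aik k i x <-> i*pa k <= x <= i*pa k + i.
Proof. rewrite /Aik; case: i => [|i] /=; rewrite /interval; lia. Qed.

Lemma Bik_iff k i x :
  Bik k i x <-> 0 < i /\ i*pa k + pa k %/ 2 <= x <= i*pa k + pa k %/ 2 + i - 1.
Proof.
rewrite /Bik; case: i => [|i] /=; first by split=> [[]|[]].
split.
  move=> [y [z [hy [-> ->]]]]; move/Aik_iff: hy; rewrite /pc; lia.
move=> [_ hx]; exists (x - pc k), (pc k); split; last by split=> //; rewrite /pc; lia.
apply/Aik_iff; rewrite /pc; lia.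
Qed.

Lemma H11_iff k x : H11 k x <-> Hh (3*k+2) x.
Proof.
have ha : pa k = 2*(3*k+2) by rewrite /pa; lia.
have hh : pa k %/ 2 = 3*k+2 by rewrite /pa; lia.
have ht : pt k = 3*k+1 by rewrite /pt /pa; lia.
rewrite /H11 /Hh /Ck /from ht; split.
  case=> [[i hi [/Aik_iff hA|/Bik_iff hB]]|hC].
  - left; exists i; first lia. left; rewrite -ha; lia.
  - left; exists i; first lia. right; rewrite -ha; lia.
  - right; rewrite -ha; lia.
case=> [[i hi [hA|hB]]|hC].
- left; exists i; first lia. left; apply/Aik_iff; rewrite ha; lia.
- left; exists i; first lia. right; apply/Bik_iff; rewrite hh ha; lia.
- right; rewrite ha; lia.
Qed.

Theorem lemma4p11 (k : nat) (hk : 0 < k) :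
  let a := pa k in let t := pt k in
  let G := gen (Sk k) in
  (* (1) *)
  (forall x, G x <->
     exists q r u, r <= q /\ x = (q + u) * a + u * (a %/ 2) + r) /\
  (* (2) *)
  (forall x, G x <-> H11 k x) /\
  (* (3) *)
  ((forall i, i <= t -> set_lt (Aik k i) (Bik k i)) /\
   (forall i, i < t -> set_lt (Bik k i) (Aik k i.+1)) /\
   set_lt (Bik k t) (Ck k)) /\
  (* (4) *)
  perm_numerical_semigroup 3 (H11 k).
Proof.
move=> a t G; rewrite /a /t /G; clear a t G.
have ha : pa k = 2*(3*k+2) by rewrite /pa; lia.
have hh : pa k %/ 2 = 3*k+2 by rewrite /pa; lia.
have ht : pt k = 3*k+1 by rewrite /pt /pa; lia.
have P1 : forall x, gen (Sk k) x <->
     exists q r u, r <= q /\ x = (q + u) * pa k + u * (pa k %/ 2) + r.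
  apply: part1_gen => x; by rewrite /Sk /pb /pc.
have P2 : forall x, gen (Sk k) x <-> H11 k x.
  move=> x; rewrite P1 H11_iff -part2_gen; last lia.
  by rewrite hh ha.
split; first exact: P1.
split; first exact: P2.
split.
  split.
    move=> i hi x y /Aik_iff hx /Bik_iff hy; rewrite hh ha in hx hy ht hi; lia.
  split.
    move=> i hi x y /Bik_iff hx /Aik_iff hy; rewrite hh ha in hx hy; rewrite ht in hi; lia.
  move=> x y /Bik_iff hx; rewrite /Ck /from hh ht ha in hx *; lia.
set h := 3*k+2.
have h2 : 2 <= h by rewrite /h; lia.
have h3 : h %% 3 = 2 by rewrite /h; lia.
split.
  split; first by apply/P2; exact: gen0.
  split; first by move=> x y /P2 hx /P2 hy; apply/P2; exact: gen_add.
  exists ((pt k + 1) * pa k) => x hx; by right.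
exists (gg h); split.
  split; first by move=> i; apply: g_mono; lia.
  move=> x; rewrite H11_iff; apply: g_enum; lia.
have g1 : gg h 1 = pa k by rewrite (@g_blk h 1 0) ?ha //; rewrite /blk /=; lia.
have g2 : gg h 2 = pb k by rewrite (@g_blk h 1 1) ?ha //; rewrite /pb /blk /=; lia.
have g3 : gg h 3 = pc k.
  by rewrite (@g_blk h 1 2) ?ha //; rewrite /pc /blk /= hh ha; lia.
split.
  move=> x; rewrite -P2; split; apply: gen_ext => y.
    case=> [->|[->|->]]; [exists 1|exists 2|exists 3] => //.
  move=> [j hj ->]; rewrite /Sk.
  case: j hj => [|[|[|[|j]]]] hj //; [left|right;left|right;right] => //.
move=> m r hr; have [? ? ?] := @g_res h m h2 h3.
exact: (@uniq3 (fun j => gg h (m*3+j))).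
Qed.
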